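(* Let $\mu_0\in(-1,0)$ and $y>0$. If $$x\ge \frac{y^{\mu_0}e^{-y}}{\Gamma(\mu_0+1,y)}-1$$ (and $x>0$), then $Q_{\mu_0}(x,y)>0$.
   Context: For real $\mu$, $x>0$, $y\ge 0$: $Q_{\mu}(x,y)=x^{\frac12(1-\mu)}\int_y^{\infty} t^{\frac12(\mu-1)}e^{-t-x}I_{\mu-1}(2\sqrt{xt})\,dt$, where $I_\nu$ is the modified Bessel function of the first kind. $\Gamma(a,y)=\int_y^\infty t^{a-1}e^{-t}dt$. *)

(* Defs.v *)
From Stdlib Require Import Reals.
From Coquelicot Require Import Coquelicot.
Open Scope R_scope.

Definition GammaPos (a : R) : R :=
  RInt_gen (fun t => Rpower t (a - 1) * exp (- t)) (at_right 0) (Rbar_locally p_infty).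

Fixpoint poch (a : R) (n : nat) : R :=
  match n with O => 1 | S m => poch a m * (a + INR m) end.

(* Gamma on all reals (meaningful off the nonpositive integers), via the
   functional equation Gamma(a) = Gamma(a+N) / (a (a+1) ... (a+N-1)). *)
Definition Gamma (a : R) : R :=
  let N := Z.to_nat (up (- a)) in GammaPos (a + INR N) / poch a N.

Definition GammaUp (a y : R) : R :=
  RInt_gen (fun t => Rpower t (a - 1) * exp (- t)) (at_point y) (Rbar_locally p_infty).

Definition BesselI (nu z : R) : R :=
  Series (fun k => Rpower (z / 2) (2 * INR k + nu) / (INR (Factorial.fact k) * Gamma (INR k + nu + 1))).

Definition Qmu (mu x y : R) : R :=
  Rpower x ((1 - mu) / 2) *
  RInt_gen (fun t => Rpower t ((mu - 1) / 2) * exp (- t - x) * BesselI (mu - 1) (2 * sqrt (x * t)))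
    (at_point y) (Rbar_locally p_infty).

(* Main.v *)
Require Import Defs.
From Stdlib Require Import Reals Lra ZArith Lia.
From Coquelicot Require Import Coquelicot.
Open Scope R_scope.

Lemma ballR (x y : R) (e : R) : ball x e y <-> Rabs (y - x) < e.
Proof. unfold ball; simpl; unfold AbsRing_ball; simpl. unfold abs, minus, plus, opp; simpl. tauto. Qed.

Lemma exc (f : R -> R) a b : (forall t, Rmin a b <= t <= Rmax a b -> continuous f t) -> ex_RInt f a b.
Proof. intros; apply (ex_RInt_continuous (V:=R_CompleteNormedModule)); auto. Qed.

Lemma absint (f g : R -> R) (b1 b2 : R) :
  (forall t, Rmin b1 b2 <= t <= Rmax b1 b2 -> continuous f t /\ continuous g t /\ Rabs (f t) <= g t) ->
  Rabs (RInt f b1 b2) <= Rabs (RInt g b1 b2).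
Proof.
  intros H.
  assert (K : forall a b, a <= b -> (forall t, a <= t <= b -> continuous f t /\ continuous g t /\ Rabs (f t) <= g t) ->
     Rabs (RInt f a b) <= Rabs (RInt g a b)).
  { intros a b Hab Ht.
    assert (Ef : ex_RInt f a b).
    { apply exc. intros z Hz. rewrite Rmin_left in Hz by lra. rewrite Rmax_right in Hz by lra. now apply Ht. }
    assert (Eg : ex_RInt g a b).
    { apply exc. intros z Hz. rewrite Rmin_left in Hz by lra. rewrite Rmax_right in Hz by lra. now apply Ht. }
    assert (Efa : ex_RInt (fun t => Rabs (f t)) a b).
    { apply exc. intros z Hz. rewrite Rmin_left in Hz by lra. rewrite Rmax_right in Hz by lra.
      apply continuous_comp. now apply Ht. apply continuous_Rabs. }
    eapply Rle_trans. apply abs_RInt_le; auto.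
    assert (RInt (fun t => Rabs (f t)) a b <= RInt g a b).
    { apply RInt_le; auto. intros z Hz; apply Ht; lra. }
    assert (0 <= RInt (fun t => Rabs (f t)) a b).
    { apply RInt_ge_0; auto. intros; apply Rabs_pos. }
    rewrite (Rabs_right (RInt g a b)); lra. }
  destruct (Rle_dec b1 b2).
  - apply K; auto. intros t Ht; apply H. rewrite Rmin_left, Rmax_right; lra.
  - assert (H' : forall t, b2 <= t <= b1 -> continuous f t /\ continuous g t /\ Rabs (f t) <= g t).
    { intros t Ht; apply H. rewrite Rmin_right, Rmax_left; lra. }
    rewrite <- (opp_RInt_swap f), <- (opp_RInt_swap g).
    2:{ apply exc. intros z Hz. rewrite Rmin_left in Hz by lra. rewrite Rmax_right in Hz by lra. now apply H'. }
    2:{ apply exc. intros z Hz. rewrite Rmin_left in Hz by lra. rewrite Rmax_right in Hz by lra. now apply H'. }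
    unfold opp; simpl. rewrite !Rabs_Ropp.
    apply K; [lra|]. auto.
Qed.

Lemma cmp (Fb : (R -> Prop) -> Prop) (FF : ProperFilter Fb) (c : R) (f g : R -> R) (lg : R) :
  Fb (fun b => forall t, Rmin c b <= t <= Rmax c b -> continuous f t /\ continuous g t /\ Rabs (f t) <= g t) ->
  is_RInt_gen g (at_point c) Fb lg -> ex_RInt_gen f (at_point c) Fb.
Proof.
  intros Hb Hg.
  unfold ex_RInt_gen, is_RInt_gen.
  assert (PF : ProperFilter (filter_prod (at_point c) Fb)).
  { apply filter_prod_proper; auto. }
  apply (filterlimi_locally_cauchy (U := R_CompleteSpace) (fun ab : R * R => is_RInt f (fst ab) (snd ab))).
  - apply Filter_prod with (fun a => a = c) (fun b => forall t, Rmin c b <= t <= Rmax c b -> continuous f t /\ continuous g t /\ Rabs (f t) <= g t); auto.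
    + reflexivity.
    + intros a b -> Hb'. split.
      * destruct (exc f c b) as [l Hl]. intros; now apply Hb'. exists l; exact Hl.
      * intros y1 y2 H1 H2. simpl in H1, H2. apply (is_RInt_unique (V:=R_CompleteNormedModule)) in H1. apply (is_RInt_unique (V:=R_CompleteNormedModule)) in H2. congruence.
  - intros eps.
    pose proof (proj1 (filterlimi_locally _ _) Hg (pos_div_2 eps)) as He.
    set (Hset := fun b => forall t, Rmin c b <= t <= Rmax c b -> continuous f t /\ continuous g t /\ Rabs (f t) <= g t).
    exists (fun ab : R * R => (fst ab = c /\ Hset (snd ab)) /\ exists z, is_RInt g (fst ab) (snd ab) z /\ ball lg (pos_div_2 eps) z).
    split.
    + apply filter_and; auto.
      apply Filter_prod with (fun a => a = c) Hset; auto. reflexivity.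
    + intros [u1 u2] [v1 v2] [[Hu1 Hu2] [zu [Hzu Bu]]] [[Hv1 Hv2] [zv [Hzv Bv]]] u' v' Hu' Hv'.
      simpl in *. subst u1 v1.
      apply ballR. apply ballR in Bu. apply ballR in Bv.
      apply (is_RInt_unique (V:=R_CompleteNormedModule)) in Hu'. apply (is_RInt_unique (V:=R_CompleteNormedModule)) in Hv'.
      apply (is_RInt_unique (V:=R_CompleteNormedModule)) in Hzu. apply (is_RInt_unique (V:=R_CompleteNormedModule)) in Hzv.
      assert (Cov : forall t, Rmin u2 v2 <= t <= Rmax u2 v2 -> Hset u2 \/ Hset v2 -> (Rmin c u2 <= t <= Rmax c u2) \/ (Rmin c v2 <= t <= Rmax c v2)).
      { intros t Ht _. unfold Rmin, Rmax in *. repeat destruct Rle_dec; lra. }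
      assert (Hall : forall t, Rmin u2 v2 <= t <= Rmax u2 v2 -> continuous f t /\ continuous g t /\ Rabs (f t) <= g t).
      { intros t Ht. destruct (Cov t Ht (or_introl Hu2)) as [H|H]; [apply Hu2|apply Hv2]; auto. }
      assert (Ef : forall b, Hset b -> ex_RInt f c b). { intros b Hb'. apply exc. intros; apply Hb'; auto. }
      assert (Eg : forall b, Hset b -> ex_RInt g c b). { intros b Hb'. apply exc. intros; apply Hb'; auto. }
      pose proof (RInt_Chasles f u2 c v2) as C1.
      pose proof (RInt_Chasles g u2 c v2) as C2.
      rewrite <- (opp_RInt_swap f c u2) in C1 by auto.
      rewrite <- (opp_RInt_swap g c u2) in C2 by auto.
      specialize (C1 (ex_RInt_swap _ _ _ (Ef u2 Hu2)) (Ef v2 Hv2)).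
      specialize (C2 (ex_RInt_swap _ _ _ (Eg u2 Hu2)) (Eg v2 Hv2)).
      unfold plus, opp in C1, C2; simpl in C1, C2.
      pose proof (absint f g u2 v2 Hall) as Ab.
      rewrite <- C1, <- C2 in Ab. rewrite Hu', Hv', Hzu, Hzv in Ab.
      simpl in Bu, Bv.
      replace (v' - u') with (- u' + v') by ring.
      eapply Rle_lt_trans; [exact Ab|].
      replace (- zu + zv) with ((zv - lg) - (zu - lg)) by ring.
      eapply Rle_lt_trans; [apply Rabs_triang|]. rewrite Rabs_Ropp. pose proof (proj1 (ballR _ _ _) Bu); pose proof (proj1 (ballR _ _ _) Bv). simpl in *. lra.
Qed.

Lemma expLe x y : x <= y -> exp x <= exp y.
Proof. intros [H|H]. left; apply exp_increasing; auto. subst; lra. Qed.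

Lemma Rpow_pos t b : 0 < Rpower t b.
Proof. unfold Rpower; apply exp_pos. Qed.

Lemma drp t b : 0 < t -> is_derive (fun u => Rpower u b) t (b * Rpower t (b - 1)).
Proof. intros; apply is_derive_Reals, derivable_pt_lim_power; auto. Qed.

Lemma crp t b : 0 < t -> continuous (fun u => Rpower u b) t.
Proof. intros; apply (ex_derive_continuous (fun u => Rpower u b)). eexists; apply drp; auto. Qed.

Definition w (a t : R) := Rpower t (a - 1) * exp (- t).

Lemma cw a t : 0 < t -> continuous (w a) t.
Proof.
  intros; unfold w. apply (continuous_mult (fun u => Rpower u (a-1)) (fun u => exp (- u))).
  apply crp; auto. apply (ex_derive_continuous (fun u => exp (- u))). auto_derive; auto.
Qed.

Lemma w_pos a t : 0 < w a t.
Proof. unfold w. apply Rmult_lt_0_compat. apply Rpow_pos. apply exp_pos. Qed.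

Lemma lim_point (f : R -> R) c : filterlim f (at_point c) (locally (f c)).
Proof. intros P HP. unfold filtermap, at_point. now apply locally_singleton. Qed.

Lemma pow_le_exp z N : 0 <= z -> z ^ N <= INR (Factorial.fact N) * exp z.
Proof.
  intros Hz.
  pose proof (exp_ge_taylor z N Hz) as H.
  assert (T : z ^ N / INR (Factorial.fact N) <= sum_f_R0 (fun k => z ^ k / INR (Factorial.fact k)) N).
  { destruct N. simpl; lra. rewrite tech5.
    assert (0 <= sum_f_R0 (fun k => z ^ k / INR (Factorial.fact k)) N).
    { apply cond_pos_sum. intros k. apply Rmult_le_pos. apply pow_le; auto. left; apply Rinv_0_lt_compat, INR_fact_lt_0. }
    lra. }
  pose proof (INR_fact_lt_0 N).
  apply (Rmult_le_reg_r (/ INR (Factorial.fact N))). apply Rinv_0_lt_compat; auto.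
  replace (INR (Factorial.fact N) * exp z * / INR (Factorial.fact N)) with (exp z) by (field; lra).
  unfold Rdiv in T. lra.
Qed.

Lemma rp_bound b c : 0 < c -> exists C, 0 < C /\ forall t, c <= t -> Rpower t b <= C * exp (t / 2).
Proof.
  intros Hc.
  destruct (archimed b) as [Hup _].
  set (N := Z.to_nat (up b)).
  assert (HN : b <= INR N).
  { unfold N. destruct (Z_le_gt_dec 0 (up b)).
    - rewrite INR_IZR_INZ, Z2Nat.id by auto. lra.
    - assert (IZR (up b) <= 0). { apply IZR_le; lia. }
      destruct (up b) eqn:E; [lia|lia|]. simpl. lra. }
  exists (Rpower c b + 1 + INR (Factorial.fact N) * 2 ^ N). split.
  { pose proof (Rpow_pos c b). pose proof (INR_fact_lt_0 N). pose proof (pow_lt 2 N). nra. }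
  intros t Ht.
  assert (E1 : 1 <= exp (t / 2)). { rewrite <- exp_0. apply expLe. lra. }
  assert (E2 : t ^ N <= INR (Factorial.fact N) * 2 ^ N * exp (t / 2)).
  { replace (t ^ N) with (2 ^ N * (t / 2) ^ N) by (rewrite <- Rpow_mult_distr; f_equal; field).
    pose proof (pow_le_exp (t/2) N ltac:(lra)). pose proof (pow_lt 2 N). nra. }
  assert (Hb : Rpower t b <= Rpower c b + 1 + t ^ N).
  { pose proof (Rpow_pos c b). pose proof (pow_le t N ltac:(lra)).
    destruct (Rle_dec 1 t); destruct (Rle_dec 0 b).
    - rewrite <- Rpower_pow by lra. pose proof (Rle_Rpower t b (INR N) r HN). lra.
    - assert (Rpower t b <= Rpower t 0) by (apply Rle_Rpower; lra). rewrite Rpower_O in H1 by lra. lra.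
    - assert (Rpower t b <= Rpower 1 b) by (apply Rle_Rpower_l; lra).
      unfold Rpower at 2 in H1. rewrite ln_1, Rmult_0_r, exp_0 in H1. lra.
    - assert (Rpower c (- b) <= Rpower t (- b)) by (apply Rle_Rpower_l; lra).
      rewrite !Rpower_Ropp in H1. pose proof (Rpow_pos t b).
      assert (Rpower t b <= Rpower c b).
      { apply Rinv_le_contravar in H1. rewrite !Rinv_inv in H1. auto. apply Rinv_0_lt_compat; auto. }
      lra. }
  pose proof (Rpow_pos c b). nra.
Qed.

Lemma locpos x : 0 < x -> locally x (fun y => 0 < y).
Proof.
  intros Hx. exists (mkposreal x Hx). intros y Hy. apply ballR in Hy. simpl in Hy.
  apply Rabs_lt_between' in Hy. lra.
Qed.

Lemma I_exp c : is_RInt_gen (fun t => exp (- t / 2)) (at_point c) (Rbar_locally p_infty) (2 * exp (- c / 2)).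
Proof.
  set (f := fun t => -2 * exp (- t / 2)).
  assert (Df : forall x, is_derive f x (exp (- x / 2))).
  { intros x. unfold f. auto_derive; auto. unfold Rdiv. field. }
  apply is_RInt_gen_ext with (Derive f).
  { apply filter_forall. intros ab x _. apply is_derive_unique, Df. }
  replace (2 * exp (- c / 2)) with (0 - f c) by (unfold f; ring).
  apply is_RInt_gen_Derive.
  - apply filter_forall. intros ab x _. eexists; apply Df.
  - apply filter_forall. intros ab x _.
    apply continuous_ext_loc with (fun t => exp (- t / 2)).
    { apply filter_forall; intros y; symmetry; apply is_derive_unique, Df. }
    apply (ex_derive_continuous (fun t => exp (- t / 2))). auto_derive; auto.
  - apply lim_point.
  - apply filterlim_locally. intros eps. simpl.
    exists (-2 * ln (eps / 2)). intros t Ht. apply ballR.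
    unfold f. rewrite Rminus_0_r, Rabs_left.
    2:{ pose proof (exp_pos (- t / 2)). lra. }
    assert (exp (- t / 2) < exp (ln (eps / 2))). { apply exp_increasing. lra. }
    rewrite exp_ln in H. lra. pose proof (cond_pos eps); lra.
Qed.

Lemma I_pow a c : 0 < a -> 0 < c ->
  is_RInt_gen (fun t => Rpower t (a - 1)) (at_right 0) (at_point c) (/ a * Rpower c a).
Proof.
  intros Ha Hc.
  set (f := fun t => / a * Rpower t a).
  assert (Df : forall x, 0 < x -> is_derive f x (Rpower x (a - 1))).
  { intros x Hx. unfold f. replace (Rpower x (a - 1)) with (/ a * (a * Rpower x (a - 1))) by (field; lra).
    apply (is_derive_scal (fun t => Rpower t a)). apply drp; auto. }
  assert (Pr : filter_prod (at_right 0) (at_point c) (fun ab => 0 < fst ab /\ snd ab = c)).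
  { apply Filter_prod with (fun a => 0 < a) (fun b => b = c).
    - unfold at_right, within. apply filter_forall; auto.
    - unfold at_point. reflexivity.
    - intros; simpl; auto. }
  apply is_RInt_gen_ext with (Derive f).
  { eapply filter_imp; [|exact Pr]. intros [u v] [Hu Hv] x Hx; simpl in *. subst v.
    apply is_derive_unique, Df. unfold Rmin, Rmax in Hx. destruct Rle_dec; lra. }
  replace (/ a * Rpower c a) with (f c - 0) by (unfold f; ring).
  apply is_RInt_gen_Derive.
  - eapply filter_imp; [|exact Pr]. intros [u v] [Hu Hv] x Hx; simpl in *. subst v.
    eexists; apply Df. unfold Rmin, Rmax in Hx. destruct Rle_dec; lra.
  - eapply filter_imp; [|exact Pr]. intros [u v] [Hu Hv] x Hx; simpl in *. subst v.
    assert (0 < x) by (unfold Rmin, Rmax in Hx; destruct Rle_dec; lra).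
    apply continuous_ext_loc with (fun t => Rpower t (a - 1)).
    { eapply filter_imp; [|apply locpos; exact H]. intros y Hy; symmetry; apply is_derive_unique, Df; auto. }
    apply crp; auto.
  - apply filterlim_locally. intros eps. unfold at_right, within.
    assert (He : 0 < eps * a) by (pose proof (cond_pos eps); nra).
    exists (mkposreal _ (exp_pos (ln (eps * a) / a))). intros u Hu Hu0. simpl in Hu.
    pose proof (proj1 (ballR _ _ _) Hu) as Hu'. clear Hu. apply ballR. simpl in *.
    rewrite Rminus_0_r in Hu' |- *. rewrite Rabs_right in Hu' by lra. rename Hu' into Hu.
    unfold f. rewrite Rabs_right.
    2:{ pose proof (Rpow_pos u a). apply Rle_ge. apply Rmult_le_pos; [left; apply Rinv_0_lt_compat; auto|lra]. }
    assert (ln u < ln (eps * a) / a).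
    { rewrite <- (ln_exp (ln (eps * a) / a)). apply ln_increasing; auto. }
    assert (Rpower u a < eps * a).
    { unfold Rpower. rewrite <- (exp_ln (eps * a)) by auto. apply exp_increasing.
      apply (Rmult_lt_compat_l a) in H; auto. replace (a * (ln (eps * a) / a)) with (ln (eps * a)) in H by (field; lra). lra. }
    apply (Rmult_lt_reg_l a); auto. replace (a * (/ a * Rpower u a)) with (Rpower u a) by (field; lra). lra.
  - apply lim_point.
Qed.

Lemma ex_gam0 a c : 0 < a -> 0 < c -> ex_RInt_gen (w a) (at_right 0) (at_point c).
Proof.
  intros Ha Hc.
  assert (H : ex_RInt_gen (w a) (at_point c) (at_right 0)).
  { apply (cmp (at_right 0) (at_right_proper_filter 0) c (w a) (fun t => Rpower t (a - 1)) (opp (/ a * Rpower c a))).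
    - unfold at_right, within. apply filter_forall. intros u Hu t Ht.
      assert (0 < t) by (unfold Rmin, Rmax in Ht; destruct Rle_dec; lra).
      split; [apply cw; auto|split; [apply crp; auto|]].
      rewrite Rabs_right by (left; apply w_pos). unfold w.
      assert (exp (- t) <= 1) by (rewrite <- exp_0; apply expLe; lra).
      pose proof (Rpow_pos t (a - 1)). nra.
    - apply (is_RInt_gen_swap (V:=R_NormedModule)); try apply at_point_filter; try apply at_right_proper_filter. apply I_pow; auto. }
  destruct H as [l Hl]. exists (opp l). apply (is_RInt_gen_swap (V:=R_NormedModule)); auto; try apply at_point_filter; try apply at_right_proper_filter.
Qed.

Lemma ex_gaminf a c : 0 < c -> ex_RInt_gen (w a) (at_point c) (Rbar_locally p_infty).
Proof.
  intros Hc.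
  destruct (rp_bound (a - 1) c Hc) as [C [HC HB]].
  apply (cmp (Rbar_locally p_infty) (Rbar_locally_filter p_infty) c (w a) (fun t => C * exp (- t / 2)) (C * (2 * exp (- c / 2)))).
  - exists c. intros b Hb t Ht.
    assert (c <= t) by (unfold Rmin, Rmax in Ht; destruct Rle_dec; lra).
    split; [apply cw; lra|split].
    + apply (ex_derive_continuous (fun t => C * exp (- t / 2))). auto_derive; auto.
    + rewrite Rabs_right by (left; apply w_pos). unfold w.
      specialize (HB t H).
      replace (exp (- t / 2)) with (exp (t / 2) * exp (- t)).
      2:{ rewrite <- exp_plus. f_equal. field. }
      pose proof (exp_pos (- t)). nra.
  - apply (is_RInt_gen_scal (fun t => exp (- t / 2)) C). apply I_exp.
Qed.

Lemma ex_gam a : 0 < a -> ex_RInt_gen (w a) (at_right 0) (Rbar_locally p_infty).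
Proof.
  intros Ha. apply ex_RInt_gen_Chasles with 1. apply ex_gam0; lra. apply ex_gaminf; lra.
Qed.

Lemma nonneg_gen (Fa Fb : (R -> Prop) -> Prop) (FA : ProperFilter Fa) (FB : ProperFilter Fb) (f : R -> R) :
  filter_prod Fa Fb (fun ab => fst ab <= snd ab) -> (forall x, 0 <= f x) ->
  ex_RInt_gen f Fa Fb -> 0 <= RInt_gen f Fa Fb.
Proof.
  intros Hle Hf Ex.
  pose proof (RInt_gen_correct f Ex) as C.
  assert (N' : Rabs (RInt_gen f Fa Fb) <= RInt_gen f Fa Fb).
  { apply (RInt_gen_norm (V:=R_CompleteNormedModule) f f _ _ Hle); auto. apply filter_forall. intros ab x _. unfold norm; simpl. unfold abs; simpl. rewrite Rabs_right; [lra|]. apply Rle_ge; auto. }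
  pose proof (Rabs_pos (RInt_gen f Fa Fb)). lra.
Qed.

Lemma RInt_gen_pt (f : R -> R) a b : ex_RInt f a b -> RInt_gen f (at_point a) (at_point b) = RInt f a b.
Proof.
  intros H. apply is_RInt_gen_unique. apply is_RInt_gen_at_point. apply RInt_correct; auto.
Qed.

Lemma GUp_lb a c d : 0 < c < d -> RInt (w a) c d <= RInt_gen (w a) (at_point c) (Rbar_locally p_infty).
Proof.
  intros Hcd.
  assert (E1 : ex_RInt (w a) c d). { apply exc. intros t Ht. apply cw. unfold Rmin in Ht; destruct Rle_dec; lra. }
  assert (E2 := ex_gaminf a d ltac:(lra)).
  rewrite <- (RInt_gen_Chasles (w a) d).
  2:{ apply ex_RInt_gen_at_point; auto. }
  2:{ auto. }
  rewrite RInt_gen_pt; auto.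
  assert (0 <= RInt_gen (w a) (at_point d) (Rbar_locally p_infty)).
  { apply nonneg_gen; try apply at_point_filter; try apply Rbar_locally_filter.
    apply Filter_prod with (fun u => u = d) (fun v => d < v). reflexivity. exists d; auto. intros u v -> Hv; simpl; lra.
    intros; left; apply w_pos. exact E2. }
  unfold plus; simpl. lra.
Qed.

Lemma GUp_pos a c : 0 < c -> 0 < RInt_gen (w a) (at_point c) (Rbar_locally p_infty).
Proof.
  intros Hc. eapply Rlt_le_trans; [|apply (GUp_lb a c (c + 1)); lra].
  apply RInt_gt_0. lra. intros; apply w_pos. intros; apply cw; lra.
Qed.

Lemma GPos_lb a c d : 0 < a -> 0 < c < d -> RInt (w a) c d <= GammaPos a.
Proof.
  intros Ha Hcd. unfold GammaPos. fold (w a).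
  rewrite <- (RInt_gen_Chasles (w a) c).
  2:{ apply ex_gam0; lra. }
  2:{ apply ex_gaminf; lra. }
  assert (0 <= RInt_gen (w a) (at_right 0) (at_point c)).
  { apply nonneg_gen; auto. apply at_right_proper_filter. apply at_point_filter.
    apply Filter_prod with (fun u => u < c) (fun v => v = c).
    - exists (mkposreal c ltac:(lra)). intros y Hy _. pose proof (proj1 (ballR _ _ _) Hy) as H. simpl in H.
      apply Rabs_lt_between' in H. lra.
    - reflexivity.
    - intros u v Hu ->; simpl; lra.
    - intros; left; apply w_pos.
    - apply ex_gam0; lra. }
  pose proof (GUp_lb a c d Hcd). unfold plus; simpl. lra.
Qed.

Lemma G_ge (mu Mg : R) (n : nat) : -1 < mu -> 1 <= Mg -> (1 <= n)%nat ->
  Mg ^ n * exp (- (Mg + 1)) / (Mg + 1) ^ 2 <= GammaPos (INR n + mu).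
Proof.
  intros Hmu HM Hn.
  assert (Ha : 0 < INR n + mu). { apply le_INR in Hn. simpl in Hn. lra. }
  eapply Rle_trans; [|apply (GPos_lb _ Mg (Mg + 1)); lra].
  set (K := Mg ^ n * exp (- (Mg + 1)) / (Mg + 1) ^ 2).
  replace K with (RInt (fun _ => K) Mg (Mg + 1)).
  2:{ rewrite RInt_const. unfold scal; simpl; unfold mult; simpl. ring. }
  apply RInt_le. lra. apply ex_RInt_const. apply exc. intros t Ht; apply cw. unfold Rmin in Ht; destruct Rle_dec; lra.
  intros t Ht. unfold w, K.
  replace (INR n + mu - 1) with (INR n + (mu - 1)) by ring.
  rewrite Rpower_plus, Rpower_pow by lra.
  assert (R1 : Rpower t (-2) <= Rpower t (mu - 1)) by (apply Rle_Rpower; lra).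
  replace (-2) with (- INR 2) in R1 by (simpl; ring).
  rewrite Rpower_Ropp, Rpower_pow in R1 by lra.
  assert (R2 : Mg ^ n <= t ^ n) by (apply pow_incr; lra).
  assert (R3 : exp (- (Mg + 1)) <= exp (- t)) by (apply expLe; lra).
  assert (R4 : / (Mg + 1) ^ 2 <= / t ^ 2).
  { apply Rinv_le_contravar. apply pow_lt; lra. apply pow_incr; lra. }
  unfold Rdiv.
  assert (0 <= Mg ^ n) by (apply pow_le; lra).
  assert (0 <= exp (- (Mg + 1))) by (left; apply exp_pos).
  assert (0 <= / (Mg + 1) ^ 2) by (left; apply Rinv_0_lt_compat, pow_lt; lra).
  pose proof (Rpow_pos t (mu - 1)).
  assert (Mg ^ n * exp (- (Mg + 1)) * / (Mg + 1) ^ 2 <= t ^ n * exp (- t) * / t ^ 2).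
  { apply Rmult_le_compat; try apply Rmult_le_pos; auto. apply Rmult_le_compat; auto. }
  assert (0 <= t ^ n * exp (- t)) by (apply Rmult_le_pos; [apply pow_le; lra| left; apply exp_pos]).
  nra.
Qed.

Lemma up_nonpos r : 0 < r -> (up (- r) <= 0)%Z.
Proof.
  intros Hr. destruct (archimed (- r)) as [H1 H2].
  assert (IZR (up (- r)) < 1) by lra.
  apply lt_IZR in H. lia.
Qed.

Lemma gam_k (mu : R) (n : nat) : -1 < mu -> (1 <= n)%nat ->
  Gamma (INR n + (mu - 1) + 1) = GammaPos (INR n + mu).
Proof.
  intros Hmu Hn.
  assert (Ha : 0 < INR n + (mu - 1) + 1). { apply le_INR in Hn. simpl in Hn. lra. }
  unfold Gamma. cbv zeta.
  pose proof (up_nonpos _ Ha) as Hu.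
  destruct (up (- (INR n + (mu - 1) + 1))) eqn:E; try lia; simpl.
  - unfold Rdiv. rewrite Rinv_1, Rmult_1_r. f_equal. ring.
  - unfold Rdiv. rewrite Rinv_1, Rmult_1_r. f_equal. ring.
Qed.

Lemma gam_0 (mu : R) : -1 < mu < 0 ->
  Gamma (INR 0 + (mu - 1) + 1) = GammaPos (mu + 1) / mu.
Proof.
  intros Hmu.
  unfold Gamma. cbv zeta.
  destruct (archimed (- (INR 0 + (mu - 1) + 1))) as [H1 H2].
  simpl INR in H1, H2.
  assert (E : up (- (0 + (mu - 1) + 1)) = 1%Z).
  { assert (0 < IZR (up (- (0 + (mu - 1) + 1)))) by lra.
    assert (IZR (up (- (0 + (mu - 1) + 1))) < 2) by lra.
    apply lt_IZR in H. apply lt_IZR in H0. lia. }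
  simpl INR. rewrite E. simpl. f_equal. f_equal. ring. ring.
Qed.

Definition cc (mu : R) (k : nat) := / (INR (Factorial.fact k) * Gamma (INR k + (mu - 1) + 1)).

Lemma Gk_pos mu k : -1 < mu -> (1 <= k)%nat -> 0 < GammaPos (INR k + mu).
Proof.
  intros Hmu Hk. eapply Rlt_le_trans; [|apply (G_ge mu 1 k); auto; lra].
  rewrite pow1. apply Rmult_lt_0_compat. rewrite Rmult_1_l; apply exp_pos. apply Rinv_0_lt_compat, pow_lt; lra.
Qed.

Lemma cc_0 mu : -1 < mu < 0 -> cc mu 0 = mu / GammaPos (mu + 1).
Proof.
  intros Hmu. unfold cc. rewrite gam_0 by auto. simpl. 
  replace (mu + 1) with (INR 1 + mu) by (simpl; ring).
  pose proof (Gk_pos mu 1 ltac:(lra) (le_n 1)). field. split; lra.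
Qed.

Lemma cc_k mu k : -1 < mu -> (1 <= k)%nat -> cc mu k = / (INR (Factorial.fact k) * GammaPos (INR k + mu)).
Proof. intros; unfold cc; rewrite gam_k; auto. Qed.

Lemma cc_pos mu k : -1 < mu -> (1 <= k)%nat -> 0 < cc mu k.
Proof.
  intros; rewrite cc_k; auto. apply Rinv_0_lt_compat, Rmult_lt_0_compat. apply INR_fact_lt_0. apply Gk_pos; auto.
Qed.

Definition DD mu Mg := Rmax (Rabs (cc mu 0)) ((Mg + 1) ^ 2 * exp (Mg + 1)).

Lemma DD_pos mu Mg : 0 <= Mg -> 0 < DD mu Mg.
Proof.
  intros. unfold DD. eapply Rlt_le_trans; [|apply Rmax_r].
  apply Rmult_lt_0_compat. apply pow_lt; lra. apply exp_pos.
Qed.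

Lemma cc_bound mu Mg k : -1 < mu < 0 -> 1 <= Mg ->
  Rabs (cc mu k) <= DD mu Mg / (INR (Factorial.fact k) * Mg ^ k).
Proof.
  intros Hmu HM. destruct k as [|k].
  - simpl. rewrite Rmult_1_r. unfold Rdiv. rewrite Rinv_1, Rmult_1_r. apply Rmax_l.
  - rewrite Rabs_right by (left; apply cc_pos; lia || lra).
    rewrite cc_k by (lia || lra).
    pose proof (G_ge mu Mg (S k) ltac:(lra) HM ltac:(lia)) as Hg.
    pose proof (INR_fact_lt_0 (S k)) as Hf.
    assert (HMk : 0 < Mg ^ S k) by (apply pow_lt; lra).
    assert (HE : 0 < exp (- (Mg + 1))) by apply exp_pos.
    assert (HM2 : 0 < (Mg + 1) ^ 2) by (apply pow_lt; lra).
    assert (Hlow : 0 < Mg ^ S k * exp (- (Mg + 1)) / (Mg + 1) ^ 2).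
    { unfold Rdiv. apply Rmult_lt_0_compat; [apply Rmult_lt_0_compat; auto|apply Rinv_0_lt_compat; auto]. }
    apply Rle_trans with ((Mg + 1) ^ 2 * exp (Mg + 1) / (INR (Factorial.fact (S k)) * Mg ^ S k)).
    + replace ((Mg + 1) ^ 2 * exp (Mg + 1) / (INR (Factorial.fact (S k)) * Mg ^ S k))
        with (/ (INR (Factorial.fact (S k)) * (Mg ^ S k * exp (- (Mg + 1)) / (Mg + 1) ^ 2))).
      2:{ rewrite exp_Ropp. pose proof (exp_pos (Mg+1)). field. repeat split; lra. }
      apply Rinv_le_contravar. apply Rmult_lt_0_compat; auto.
      apply Rmult_le_compat_l; lra.
    + unfold Rdiv. apply Rmult_le_compat_r. left; apply Rinv_0_lt_compat, Rmult_lt_0_compat; auto.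
      apply Rmax_r.
Qed.

Lemma term_bound mu Mg s k : -1 < mu < 0 -> 1 <= Mg -> 0 <= s ->
  Rabs (cc mu k * s ^ k) <= DD mu Mg * ((s / Mg) ^ k * / INR (Factorial.fact k)).
Proof.
  intros Hmu HM Hs. rewrite Rabs_mult, (Rabs_right (s ^ k)) by (apply Rle_ge, pow_le; auto).
  pose proof (cc_bound mu Mg k Hmu HM).
  pose proof (INR_fact_lt_0 k). assert (0 < Mg ^ k) by (apply pow_lt; lra).
  replace (DD mu Mg * ((s / Mg) ^ k * / INR (Factorial.fact k))) with (DD mu Mg / (INR (Factorial.fact k) * Mg ^ k) * s ^ k).
  2:{ unfold Rdiv. rewrite Rpow_mult_distr, pow_inv. field. split; lra. }
  apply Rmult_le_compat_r; auto. apply pow_le; auto.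
Qed.

Lemma exp_series z : is_series (fun k => z ^ k * / INR (Factorial.fact k)) (exp z).
Proof.
  pose proof (is_exp_Reals z) as H. unfold is_pseries in H.
  eapply is_series_ext; [|exact H]. intros n. simpl. rewrite pow_n_pow. unfold scal; simpl; unfold mult; simpl. ring.
Qed.

Lemma dom_series mu Mg s : -1 < mu < 0 -> 1 <= Mg -> 0 <= s ->
  is_series (fun k => DD mu Mg * ((s / Mg) ^ k * / INR (Factorial.fact k))) (DD mu Mg * exp (s / Mg)).
Proof.
  intros. apply (is_series_scal_l (DD mu Mg) (fun k => (s / Mg) ^ k * / INR (Factorial.fact k))). apply exp_series.
Qed.

Lemma ex_abs mu Mg s : -1 < mu < 0 -> 1 <= Mg -> 0 <= s ->
  ex_series (fun k => Rabs (cc mu k * s ^ k)).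
Proof.
  intros. apply (ex_series_le (K:=R_AbsRing) (V:=R_CompleteNormedModule) _ (fun k => DD mu Mg * ((s / Mg) ^ k * / INR (Factorial.fact k)))).
  - intros n. unfold norm; simpl; unfold abs; simpl. rewrite Rabs_Rabsolu. apply term_bound; auto.
  - eexists; apply dom_series; auto.
Qed.

Lemma ps_abs_bound mu Mg s : -1 < mu < 0 -> 1 <= Mg -> 0 <= s ->
  Rabs (PSeries (cc mu) s) <= DD mu Mg * exp (s / Mg).
Proof.
  intros. unfold PSeries. eapply Rle_trans. apply Series_Rabs. apply ex_abs with Mg; auto.
  rewrite <- (is_series_unique _ _ (dom_series mu Mg s H H0 H1)).
  apply Series_le. intros n. split. apply Rabs_pos. apply term_bound; auto.
  eexists; apply dom_series; auto.
Qed.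

Lemma ps_lower mu s : -1 < mu < 0 -> 0 <= s ->
  cc mu 0 + cc mu 1 * s + cc mu 2 * s ^ 2 <= PSeries (cc mu) s.
Proof.
  intros Hmu Hs. unfold PSeries.
  assert (Ex : ex_series (fun k => cc mu k * s ^ k)) by (apply ex_series_Rabs, (ex_abs mu 1); auto; lra).
  rewrite (Series_incr_n _ 3) by (auto || lia). simpl sum_f_R0.
  set (T := Series (fun k => cc mu (3 + k) * s ^ (3 + k))).
  assert (0 <= T).
  { assert (ET : ex_series (fun k => Rabs (cc mu (3 + k) * s ^ (3 + k)))).
    { apply (ex_series_incr_n (fun k => Rabs (cc mu k * s ^ k)) 3). apply (ex_abs mu 1); auto; lra. }
    pose proof (Series_Rabs _ ET) as HT. cbv beta in HT.
    rewrite (Series_ext (fun k => Rabs (cc mu (3 + k) * s ^ (3 + k))) (fun k => cc mu (3 + k) * s ^ (3 + k))) in HT.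
    2:{ intros n. apply Rabs_right. apply Rle_ge, Rmult_le_pos. left; apply cc_pos; lia || lra. apply pow_le; auto. }
    fold T in HT. pose proof (Rabs_pos T). lra. }
  simpl. lra.
Qed.

Lemma cv_rad mu s : -1 < mu < 0 -> Rbar_lt (Rabs s) (CV_radius (cc mu)).
Proof.
  intros Hmu.
  destruct (CV_radius_bounded (cc mu)) as [Hub _].
  set (r := Rabs s + 1).
  assert (Hr : 0 <= r) by (unfold r; pose proof (Rabs_pos s); lra).
  assert (E : exists M, forall n, Rabs (cc mu n * r ^ n) <= M).
  { exists (DD mu (r + 1)). intros n.
    eapply Rle_trans. apply (term_bound mu (r + 1)); auto; lra.
    pose proof (DD_pos mu (r + 1) ltac:(lra)).
    assert ((r / (r + 1)) ^ n <= 1).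
    { assert (Q0 : 0 <= r / (r + 1)). { apply Rmult_le_pos. exact Hr. left; apply Rinv_0_lt_compat. lra. }
      assert (Q1 : r / (r + 1) <= 1).
      { replace (r / (r + 1)) with (1 - / (r + 1)) by (field; lra). assert (0 < / (r + 1)) by (apply Rinv_0_lt_compat; lra). lra. }
      pose proof (pow_incr (r / (r + 1)) 1 n (conj Q0 Q1)) as P. rewrite pow1 in P. exact P. }
    assert (/ INR (Factorial.fact n) <= 1).
    { rewrite <- Rinv_1. apply Rinv_le_contravar. lra. apply (le_INR 1). apply lt_O_fact. }
    assert (0 <= (r / (r + 1)) ^ n).
    { apply pow_le. apply Rmult_le_pos; auto. left; apply Rinv_0_lt_compat; lra. }
    assert (0 <= / INR (Factorial.fact n)) by (left; apply Rinv_0_lt_compat, INR_fact_lt_0).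
    assert ((r / (r + 1)) ^ n * / INR (Factorial.fact n) <= 1).
    { nra. }
    nra. }
  pose proof (Hub r E) as Hle.
  apply Rbar_lt_le_trans with (Finite r); auto. simpl. unfold r; lra.
Qed.

Lemma cont_ps mu s : -1 < mu < 0 -> continuous (PSeries (cc mu)) s.
Proof. intros. apply continuity_pt_filterlim. apply PSeries_continuity. apply cv_rad; auto. Qed.

Definition gg mu x t := w mu t * PSeries (cc mu) (x * t).

Lemma cont_gg mu x t : -1 < mu < 0 -> 0 < t -> continuous (gg mu x) t.
Proof.
  intros. unfold gg. apply (continuous_mult (w mu) (fun t => PSeries (cc mu) (x * t))). apply cw; auto.
  apply (continuous_comp (fun t => x * t) (PSeries (cc mu))).
  apply (ex_derive_continuous (fun t => x * t)). auto_derive; auto.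
  apply cont_ps; auto.
Qed.

Lemma bessel_eq mu x t : 0 < x -> 0 < t ->
  BesselI (mu - 1) (2 * sqrt (x * t)) = Rpower (sqrt (x * t)) (mu - 1) * PSeries (cc mu) (x * t).
Proof.
  intros Hx Ht. unfold BesselI, PSeries. rewrite <- Series_scal_l. apply Series_ext. intros k.
  assert (Hxt : 0 < x * t) by nra.
  pose proof (sqrt_lt_R0 _ Hxt) as Hs.
  replace (2 * sqrt (x * t) / 2) with (sqrt (x * t)) by field.
  rewrite Rpower_plus.
  replace (2 * INR k) with (INR 2 * INR k) by (simpl; ring).
  rewrite <- Rpower_mult. rewrite (Rpower_pow 2 (sqrt (x * t))) by lra. rewrite pow2_sqrt by lra. rewrite (Rpower_pow k (x * t)) by lra.
  unfold cc, Rdiv. ring.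
Qed.

Lemma Rpow_dec b y t : b <= 0 -> 0 < y <= t -> Rpower t b <= Rpower y b.
Proof.
  intros Hb Hyt.
  assert (Rpower y (- b) <= Rpower t (- b)) by (apply Rle_Rpower_l; lra).
  rewrite !Rpower_Ropp in H. pose proof (Rpow_pos t b). pose proof (Rpow_pos y b).
  apply Rinv_le_contravar in H. rewrite !Rinv_inv in H. auto. apply Rinv_0_lt_compat; auto.
Qed.

Lemma byparts mu y : mu < 0 -> 0 < y ->
  RInt_gen (w (mu + 1)) (at_point y) (Rbar_locally p_infty) - mu * RInt_gen (w mu) (at_point y) (Rbar_locally p_infty)
  = Rpower y mu * exp (- y).
Proof.
  intros Hmu Hy.
  set (F := fun t => - (Rpower t mu * exp (- t))).
  set (d := fun t => w (mu + 1) t - mu * w mu t).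
  assert (DF : forall t, 0 < t -> is_derive F t (d t)).
  { intros t Ht. unfold F, d, w.
    assert (De : is_derive (fun t => exp (- t)) t (- exp (- t))) by (auto_derive; auto; ring).
    pose proof (is_derive_mult (fun t => Rpower t mu) (fun t => exp (- t)) t _ _ (drp t mu Ht) De Rmult_comm) as M.
    pose proof (is_derive_opp _ _ _ M) as M'.
    replace (mu + 1 - 1) with mu by ring.
    replace (Rpower t mu * exp (- t) - mu * (Rpower t (mu - 1) * exp (- t)))
      with (opp (plus (mult (mu * Rpower t (mu - 1)) (exp (- t))) (mult (Rpower t mu) (- exp (- t))))).
    2:{ unfold opp, plus, mult; simpl. ring. }
    exact M'. }
  assert (H1 : is_RInt_gen d (at_point y) (Rbar_locally p_infty) (0 - F y)).
  { apply is_RInt_gen_ext with (Derive F).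
    { apply Filter_prod with (fun a => a = y) (fun b => y < b). reflexivity. exists y; auto.
      intros a b -> Hb t Ht. simpl in Ht. apply is_derive_unique, DF. rewrite Rmin_left in Ht by lra. lra. }
    apply is_RInt_gen_Derive.
    - apply Filter_prod with (fun a => a = y) (fun b => y < b). reflexivity. exists y; auto.
      intros a b -> Hb t Ht. simpl in Ht. eexists; apply DF. rewrite Rmin_left in Ht by lra. lra.
    - apply Filter_prod with (fun a => a = y) (fun b => y < b). reflexivity. exists y; auto.
      intros a b -> Hb t Ht. simpl in Ht. rewrite Rmin_left in Ht by lra.
      apply continuous_ext_loc with d.
      { eapply filter_imp; [|apply (locpos t); lra]. intros u Hu. symmetry; apply is_derive_unique, DF; auto. }
      unfold d. apply (continuous_minus (w (mu + 1)) (fun t => mu * w mu t)). apply cw; lra.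
      apply (continuous_scal_r mu (w mu)). apply cw; lra.
    - apply lim_point.
    - apply filterlim_locally. intros eps.
      pose proof (Rpow_pos y mu) as Hry. pose proof (cond_pos eps) as He.
      exists (Rmax y (- ln (eps / Rpower y mu))). intros t Ht. apply ballR.
      assert (Hty : y < t) by (eapply Rle_lt_trans; [apply Rmax_l|exact Ht]).
      assert (Htl : - ln (eps / Rpower y mu) < t) by (eapply Rle_lt_trans; [apply Rmax_r|exact Ht]).
      unfold F. rewrite Rminus_0_r, Rabs_Ropp, Rabs_right.
      2:{ apply Rle_ge, Rmult_le_pos; left; [apply Rpow_pos|apply exp_pos]. }
      pose proof (Rpow_dec mu y t ltac:(lra) ltac:(lra)).
      assert (exp (- t) < eps / Rpower y mu).
      { rewrite <- (exp_ln (eps / Rpower y mu)). apply exp_increasing. lra.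
        apply Rmult_lt_0_compat; auto. apply Rinv_0_lt_compat; auto. }
      apply Rle_lt_trans with (Rpower y mu * exp (- t)).
      apply Rmult_le_compat_r; auto. left; apply exp_pos.
      apply (Rmult_lt_compat_l (Rpower y mu)) in H0; auto.
      replace (Rpower y mu * (eps / Rpower y mu)) with (pos eps) in H0 by (field; lra). exact H0. }
  set (U1 := RInt_gen (w (mu + 1)) (at_point y) (Rbar_locally p_infty)).
  set (U0 := RInt_gen (w mu) (at_point y) (Rbar_locally p_infty)).
  assert (H2' : is_RInt_gen (fun t => minus (w (mu + 1) t) (scal mu (w mu t))) (at_point y) (Rbar_locally p_infty)
     (minus U1 (scal mu U0))).
  { apply (is_RInt_gen_minus (w (mu + 1)) (fun t => scal mu (w mu t))).
    apply (RInt_gen_correct (V:=R_CompleteNormedModule)). apply ex_gaminf; auto.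
    apply (is_RInt_gen_scal (w mu) mu). apply (RInt_gen_correct (V:=R_CompleteNormedModule)). apply ex_gaminf; auto. }
  assert (H2 : is_RInt_gen d (at_point y) (Rbar_locally p_infty) (U1 - mu * U0)).
  { apply is_RInt_gen_ext with (fun t => minus (w (mu + 1) t) (scal mu (w mu t))).
    apply filter_forall. intros ab t _. unfold d, minus, plus, opp, scal; simpl; unfold mult; simpl. ring.
    replace (U1 - mu * U0) with (minus U1 (scal mu U0)). exact H2'.
    unfold minus, plus, opp, scal; simpl; unfold mult; simpl. ring. }
  apply (is_RInt_gen_unique (V:=R_CompleteNormedModule)) in H1. apply (is_RInt_gen_unique (V:=R_CompleteNormedModule)) in H2. rewrite <- H2, H1. unfold F. ring.
Qed.

Lemma ex_gg mu x y : -1 < mu < 0 -> 0 < x -> 0 < y ->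
  ex_RInt_gen (gg mu x) (at_point y) (Rbar_locally p_infty).
Proof.
  intros Hmu Hx Hy.
  set (Mg := 2 * x + 1).
  set (Cc := Rpower y (mu - 1) * DD mu Mg).
  apply (cmp (Rbar_locally p_infty) (Rbar_locally_filter p_infty) y (gg mu x) (fun t => Cc * exp (- t / 2)) (Cc * (2 * exp (- y / 2)))).
  - exists y. intros b Hb t Ht.
    assert (y <= t) by (unfold Rmin, Rmax in Ht; destruct Rle_dec; lra).
    split; [apply cont_gg; lra|split].
    + apply (ex_derive_continuous (fun t => Cc * exp (- t / 2))). auto_derive; auto.
    + unfold gg. rewrite Rabs_mult, (Rabs_right (w mu t)) by (left; apply w_pos).
      assert (HM : 1 <= Mg) by (unfold Mg; lra).
      pose proof (ps_abs_bound mu Mg (x * t) Hmu HM ltac:(nra)) as Hp.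
      assert (Hxt : x * t / Mg <= t / 2).
      { unfold Mg. apply (Rmult_le_reg_r (2 * x + 1)). lra. unfold Rdiv.
        rewrite Rmult_assoc, Rinv_l by lra. nra. }
      assert (He : exp (x * t / Mg) <= exp (t / 2)) by (apply expLe; auto).
      pose proof (Rpow_dec (mu - 1) y t ltac:(lra) ltac:(lra)) as Hr.
      pose proof (DD_pos mu Mg ltac:(unfold Mg; lra)) as HD.
      unfold w, Cc.
      replace (exp (- t / 2)) with (exp (- t) * exp (t / 2)) by (rewrite <- exp_plus; f_equal; field).
      pose proof (Rpow_pos t (mu - 1)). pose proof (Rpow_pos y (mu - 1)). pose proof (exp_pos (- t)).
      pose proof (exp_pos (t / 2)). pose proof (exp_pos (x * t / Mg)).
      apply Rle_trans with (Rpower t (mu - 1) * exp (- t) * (DD mu Mg * exp (t / 2))).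
      * apply Rmult_le_compat_l. nra. eapply Rle_trans; [exact Hp|]. apply Rmult_le_compat_l; lra.
      * assert (0 <= DD mu Mg * exp (t / 2)) by nra.
        assert (0 <= exp (- t) * (DD mu Mg * exp (t / 2))) by nra.
        replace (Rpower t (mu - 1) * exp (- t) * (DD mu Mg * exp (t / 2))) with
          (Rpower t (mu - 1) * (exp (- t) * (DD mu Mg * exp (t / 2)))) by ring.
        replace (Rpower y (mu - 1) * DD mu Mg * (exp (- t) * exp (t / 2))) with
          (Rpower y (mu - 1) * (exp (- t) * (DD mu Mg * exp (t / 2)))) by ring.
        apply Rmult_le_compat_r; auto.
  - apply (is_RInt_gen_scal (fun t => exp (- t / 2)) Cc). apply I_exp.
Qed.

Lemma w_shift1 mu t : 0 < t -> w (mu + 1) t = w mu t * t.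
Proof.
  intros Ht. unfold w. replace (mu + 1 - 1) with ((mu - 1) + 1) by ring.
  rewrite Rpower_plus, Rpower_1 by auto. ring.
Qed.

Lemma w_shift2 mu t : 0 < t -> w (mu + 2) t = w mu t * t ^ 2.
Proof.
  intros Ht. unfold w. replace (mu + 2 - 1) with ((mu - 1) + INR 2) by (simpl; ring).
  rewrite Rpower_plus, Rpower_pow by auto. ring.
Qed.

Lemma fprod_y y : filter_prod (at_point y) (Rbar_locally p_infty) (fun ab => fst ab = y /\ y < snd ab).
Proof.
  apply Filter_prod with (fun a => a = y) (fun b => y < b). reflexivity. exists y; auto.
  intros a b Ha Hb; simpl; auto.
Qed.

Lemma gg_lower mu x y : -1 < mu < 0 -> 0 < x -> 0 < y ->
  cc mu 0 * RInt_gen (w mu) (at_point y) (Rbar_locally p_infty)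
  + cc mu 1 * x * RInt_gen (w (mu + 1)) (at_point y) (Rbar_locally p_infty)
  + cc mu 2 * x ^ 2 * RInt_gen (w (mu + 2)) (at_point y) (Rbar_locally p_infty)
  <= RInt_gen (gg mu x) (at_point y) (Rbar_locally p_infty).
Proof.
  intros Hmu Hx Hy.
  set (U0 := RInt_gen (w mu) (at_point y) (Rbar_locally p_infty)).
  set (U1 := RInt_gen (w (mu + 1)) (at_point y) (Rbar_locally p_infty)).
  set (U2 := RInt_gen (w (mu + 2)) (at_point y) (Rbar_locally p_infty)).
  set (L := RInt_gen (gg mu x) (at_point y) (Rbar_locally p_infty)).
  set (h := fun t => plus (plus (scal (cc mu 0) (w mu t)) (scal (cc mu 1 * x) (w (mu + 1) t))) (scal (cc mu 2 * x ^ 2) (w (mu + 2) t))).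
  set (Hv := plus (plus (scal (cc mu 0) U0) (scal (cc mu 1 * x) U1)) (scal (cc mu 2 * x ^ 2) U2)).
  assert (A0 : is_RInt_gen (fun t => scal (cc mu 0) (w mu t)) (at_point y) (Rbar_locally p_infty) (scal (cc mu 0) U0)).
  { apply (is_RInt_gen_scal (w mu)). apply (RInt_gen_correct (V:=R_CompleteNormedModule)). apply ex_gaminf; auto. }
  assert (A1 : is_RInt_gen (fun t => scal (cc mu 1 * x) (w (mu + 1) t)) (at_point y) (Rbar_locally p_infty) (scal (cc mu 1 * x) U1)).
  { apply (is_RInt_gen_scal (w (mu + 1))). apply (RInt_gen_correct (V:=R_CompleteNormedModule)). apply ex_gaminf; auto. }
  assert (A2 : is_RInt_gen (fun t => scal (cc mu 2 * x ^ 2) (w (mu + 2) t)) (at_point y) (Rbar_locally p_infty) (scal (cc mu 2 * x ^ 2) U2)).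
  { apply (is_RInt_gen_scal (w (mu + 2))). apply (RInt_gen_correct (V:=R_CompleteNormedModule)). apply ex_gaminf; auto. }
  pose proof (is_RInt_gen_plus _ _ _ _ A0 A1) as A01.
  pose proof (is_RInt_gen_plus _ _ _ _ A01 A2) as Hh.
  fold h in Hh. fold Hv in Hh.
  assert (Hg : is_RInt_gen (gg mu x) (at_point y) (Rbar_locally p_infty) L).
  { apply (RInt_gen_correct (V:=R_CompleteNormedModule)). apply ex_gg; auto. }
  assert (Hd := is_RInt_gen_minus _ _ _ _ Hg Hh).
  assert (Hpt : forall t, 0 < t -> h t <= gg mu x t).
  { intros t Ht. unfold h, gg. rewrite w_shift1, w_shift2 by auto.
    pose proof (ps_lower mu (x * t) Hmu ltac:(nra)). pose proof (w_pos mu t).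
    unfold plus, scal; simpl; unfold mult; simpl.
    apply Rle_trans with (w mu t * (cc mu 0 + cc mu 1 * (x * t) + cc mu 2 * (x * t) ^ 2)).
    right; simpl; ring. apply Rmult_le_compat_l; lra. }
  assert (N : norm (minus L Hv) <= minus L Hv).
  { apply (RInt_gen_norm (V:=R_CompleteNormedModule) (Fa:=at_point y) (Fb:=Rbar_locally p_infty) (fun t => minus (gg mu x t) (h t)) (fun t => minus (gg mu x t) (h t)) (minus L Hv) (minus L Hv)).
    - eapply filter_imp; [|apply fprod_y]. intros [a b] [Ha Hb]; simpl in *; lra.
    - eapply filter_imp; [|apply fprod_y]. intros [a b] [Ha Hb] t Ht; simpl in *.
      unfold norm; simpl; unfold abs; simpl. rewrite Rabs_right. lra.
      pose proof (Hpt t ltac:(lra)). unfold minus, plus, opp; simpl. lra.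
    - exact Hd.
    - exact Hd. }
  unfold norm in N; simpl in N; unfold abs in N; simpl in N.
  assert (E : Hv = cc mu 0 * U0 + cc mu 1 * x * U1 + cc mu 2 * x ^ 2 * U2).
  { unfold Hv, plus, scal; simpl; unfold mult; simpl. ring. }
  rewrite <- E. pose proof (Rabs_pos (minus L Hv)). unfold minus, plus, opp in *; simpl in *. lra.
Qed.

Theorem proposition1 (mu0 x y : R) :
  -1 < mu0 < 0 -> 0 < y -> 0 < x ->
  Rpower y mu0 * exp (- y) / GammaUp (mu0 + 1) y - 1 <= x ->
  0 < Qmu mu0 x y.
Proof.
  intros Hmu Hy Hx Hyp.
  set (U0 := RInt_gen (w mu0) (at_point y) (Rbar_locally p_infty)).
  set (U1 := RInt_gen (w (mu0 + 1)) (at_point y) (Rbar_locally p_infty)).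
  set (U2 := RInt_gen (w (mu0 + 2)) (at_point y) (Rbar_locally p_infty)).
  set (L := RInt_gen (gg mu0 x) (at_point y) (Rbar_locally p_infty)).
  change (GammaUp (mu0 + 1) y) with U1 in Hyp.
  assert (HU1 : 0 < U1) by (apply GUp_pos; auto).
  assert (HU2 : 0 < U2) by (apply GUp_pos; auto).
  pose proof (byparts mu0 y ltac:(lra) Hy) as BP. fold U0 U1 in BP.
  pose proof (gg_lower mu0 x y Hmu Hx Hy) as LB. fold U0 U1 U2 L in LB.
  assert (HG : 0 < GammaPos (mu0 + 1)).
  { replace (mu0 + 1) with (INR 1 + mu0) by (simpl; ring). apply Gk_pos; auto; lra. }
  rewrite (cc_0 mu0 Hmu) in LB.
  rewrite (cc_k mu0 1) in LB by (lia || lra).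
  replace (INR 1 + mu0) with (mu0 + 1) in LB by (simpl; ring).
  pose proof (cc_pos mu0 2 ltac:(lra) ltac:(lia)) as Hc2.
  set (P := Rpower y mu0 * exp (- y)) in *.
  assert (HP : P <= (x + 1) * U1).
  { assert (P / U1 <= x + 1) by lra.
    apply (Rmult_le_compat_r U1) in H; [|lra]. unfold Rdiv in H.
    rewrite Rmult_assoc, Rinv_l in H by lra. lra. }
  assert (Hpos : 0 < L).
  { assert (0 <= mu0 / GammaPos (mu0 + 1) * U0 + / (INR (Factorial.fact 1) * GammaPos (mu0 + 1)) * x * U1).
    { simpl INR. rewrite Rmult_1_l.
      replace (mu0 / GammaPos (mu0 + 1) * U0 + / GammaPos (mu0 + 1) * x * U1)
        with ((mu0 * U0 + x * U1) * / GammaPos (mu0 + 1)) by (field; lra).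
      apply Rmult_le_pos. lra. left; apply Rinv_0_lt_compat; auto. }
    assert (0 < cc mu0 2 * x ^ 2 * U2).
    { apply Rmult_lt_0_compat; auto. apply Rmult_lt_0_compat; auto. apply pow_lt; auto. }
    lra. }
  set (K := Rpower x ((mu0 - 1) / 2) * exp (- x)).
  assert (HK : 0 < K) by (apply Rmult_lt_0_compat; [apply Rpow_pos|apply exp_pos]).
  assert (HI : is_RInt_gen (fun t => Rpower t ((mu0 - 1) / 2) * exp (- t - x) * BesselI (mu0 - 1) (2 * sqrt (x * t)))
                 (at_point y) (Rbar_locally p_infty) (scal K L)).
  { apply is_RInt_gen_ext with (fun t => scal K (gg mu0 x t)).
    - eapply filter_imp; [|apply fprod_y]. intros [a b] [Ha Hb] t Ht; simpl in *. subst a.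
      rewrite Rmin_left in Ht by lra.
      assert (Ht0 : 0 < t) by lra.
      rewrite bessel_eq by auto.
      rewrite <- Rpower_sqrt by nra. rewrite Rpower_mult. rewrite <- Rpower_mult_distr by auto.
      replace (/ 2 * (mu0 - 1)) with ((mu0 - 1) / 2) by field.
      unfold scal; simpl; unfold mult; simpl. unfold gg, w, K.
      replace (Rpower t (mu0 - 1)) with (Rpower t ((mu0 - 1) / 2) * Rpower t ((mu0 - 1) / 2)) by (rewrite <- Rpower_plus; f_equal; field).

      replace (- t - x) with (- t + - x) by ring. rewrite exp_plus. ring.
    - apply (is_RInt_gen_scal (gg mu0 x) K L). apply (RInt_gen_correct (V:=R_CompleteNormedModule)). apply ex_gg; auto. }
  apply (is_RInt_gen_unique (V:=R_CompleteNormedModule)) in HI.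
  unfold Qmu. rewrite HI. change (scal K L) with (K * L).
  apply Rmult_lt_0_compat. apply Rpow_pos. apply Rmult_lt_0_compat; auto.
Qed.
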